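(* Let $X$ be a non-empty metric space and let $\mathcal{U}$ be a cover of $X$ (not necessarily open). Then \[ L(\mathcal{U})\leq L_{Diam}(\mathcal{U})\leq 2\cdot L(\mathcal{U}). \]
   Context: For $x\in X$ and $S\subseteq X$, $\operatorname{dist}(x,S)=\inf_{z\in S}d(x,z)$, with $\operatorname{dist}(x,\emptyset)=\infty$. For a cover $\mathcal{U}$ of $X$ (i.e. $X=\bigcup\mathcal{U}$): $L(\mathcal{U},x):=\sup_{U\in\mathcal{U}}\operatorname{dist}(x,X\setminus U)$ and $L(\mathcal{U}):=\inf_{x\in X}L(\mathcal{U},x)$. Also $L_{Diam}(\mathcal{U}):=\sup\{D\geq 0 \mid \text{for every } A\subseteq X \text{ with } \operatorname{diam}A\leq D \text{ there exists } U\in\mathcal{U} \text{ with } A\subseteq U\}$. All these quantities take values in $[0,\infty]$. *)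

(* Defs.v *)
From Stdlib Require Import Reals.
From Coquelicot Require Import Coquelicot.
Open Scope R_scope.

Definition is_metric {X : Type} (d : X -> X -> R) : Prop :=
  (forall x y, 0 <= d x y) /\
  (forall x y, d x y = 0 <-> x = y) /\
  (forall x y, d x y = d y x) /\
  (forall x y z, d x z <= d x y + d y z).

Definition is_cover {X : Type} (U : (X -> Prop) -> Prop) : Prop :=
  forall x : X, exists V, U V /\ V x.

(* dist(x,S) = inf_{z in S} d(x,z), with inf of the empty set = +oo. *)
Definition dist {X : Type} (d : X -> X -> R) (x : X) (S : X -> Prop) : Rbar :=
  Rbar_glb (fun r => exists z, S z /\ r = Finite (d x z)).

Definition Lx {X : Type} (d : X -> X -> R) (U : (X -> Prop) -> Prop) (x : X) : Rbar :=
  Rbar_lub (fun r => exists V, U V /\ r = dist d x (fun z => ~ V z)).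

Definition L {X : Type} (d : X -> X -> R) (U : (X -> Prop) -> Prop) : Rbar :=
  Rbar_glb (fun r => exists x, r = Lx d U x).

(* diam A = sup_{a,b in A} d(a,b) (= -oo for empty A; irrelevant below). *)
Definition diam {X : Type} (d : X -> X -> R) (A : X -> Prop) : Rbar :=
  Rbar_lub (fun r => exists a b, A a /\ A b /\ r = Finite (d a b)).

Definition LDiam {X : Type} (d : X -> X -> R) (U : (X -> Prop) -> Prop) : Rbar :=
  Rbar_lub (fun r => exists D : R, 0 <= D /\ r = Finite D /\
    forall A : X -> Prop, Rbar_le (diam d A) (Finite D) ->
      exists V, U V /\ forall z, A z -> V z).

(* Main.v *)
Require Import Defs.
From Stdlib Require Import Reals.
From Coquelicot Require Import Coquelicot.
From Stdlib Require Import Lra Classical.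
Open Scope R_scope.

Lemma lub_ub (E : Rbar -> Prop) x : E x -> Rbar_le x (Rbar_lub E).
Proof. unfold Rbar_lub; destruct (Rbar_ex_lub E) as [l [H1 H2]]; simpl; auto. Qed.
Lemma lub_least (E : Rbar -> Prop) b : (forall x, E x -> Rbar_le x b) -> Rbar_le (Rbar_lub E) b.
Proof. unfold Rbar_lub; destruct (Rbar_ex_lub E) as [l [H1 H2]]; simpl; auto. Qed.
Lemma glb_lb (E : Rbar -> Prop) x : E x -> Rbar_le (Rbar_glb E) x.
Proof. unfold Rbar_glb; destruct (Rbar_ex_glb E) as [l [H1 H2]]; simpl; auto. Qed.
Lemma glb_great (E : Rbar -> Prop) b : (forall x, E x -> Rbar_le b x) -> Rbar_le b (Rbar_glb E).
Proof. unfold Rbar_glb; destruct (Rbar_ex_glb E) as [l [H1 H2]]; simpl; auto. Qed.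

Lemma two_pinf : Rbar_mult (Finite 2) p_infty = p_infty.
Proof.
  simpl. destruct Rle_dec as [H|H]; [destruct Rle_lt_or_eq_dec|]; auto; lra.
Qed.

Lemma le_by_dense (a b : Rbar) :
  (forall D : R, Rbar_lt (Finite D) a -> Rbar_le (Finite D) b) -> Rbar_le a b.
Proof.
  intros H. destruct a as [l| |], b as [m| |]; simpl in *; auto.
  - destruct (Rle_dec l m) as [h|h]; auto. exfalso.
    specialize (H ((l+m)/2)). simpl in H. assert (H' := H ltac:(lra)). lra.
  - apply (H (l-1)). lra.
  - specialize (H (m+1) I); lra.
  - apply (H 0 I).
Qed.

Theorem lemma2p10 (X : Type) (d : X -> X -> R) (U : (X -> Prop) -> Prop)
  (Hd : is_metric d) (Hne : inhabited X) (HU : is_cover U) :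
  Rbar_le (L d U) (LDiam d U) /\
  Rbar_le (LDiam d U) (Rbar_mult (Finite 2) (L d U)).
Proof.
  destruct Hd as [Hpos [Hzero [Hsym Htri]]].
  destruct Hne as [x0].
  split.
  - apply le_by_dense. intros D HD.
    destruct (Rle_dec 0 D) as [HD0|HD0].
    2:{ apply Rbar_le_trans with (Finite 0). simpl; lra.
        apply lub_ub. exists 0. split; [lra|split; [reflexivity|]].
        intros A HA.
        destruct (classic (exists a, A a)) as [[a Ha]|Hn].
        - destruct (HU a) as [V [HV HVa]]. exists V. split; auto.
          intros z Hz. assert (Hle : Rbar_le (Finite (d a z)) (Finite 0)).
          { eapply Rbar_le_trans; [|exact HA]. apply lub_ub. exists a, z; auto. }
          simpl in Hle. assert (d a z = 0) by (specialize (Hpos a z); lra).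
          apply Hzero in H. subst; auto.
        - destruct (HU x0) as [V [HV _]]. exists V; split; auto.
          intros z Hz; exfalso; apply Hn; eauto. }
    apply lub_ub. exists D. split; [lra|split; [reflexivity|]].
    intros A HA.
    destruct (classic (exists a, A a)) as [[a Ha]|Hn].
    2:{ destruct (HU x0) as [V [HV _]]. exists V; split; auto.
        intros z Hz; exfalso; apply Hn; eauto. }
    assert (HLa : Rbar_lt (Finite D) (Lx d U a)).
    { eapply Rbar_lt_le_trans; [exact HD|]. apply glb_lb. exists a; reflexivity. }
    destruct (classic (exists V, U V /\ Rbar_lt (Finite D) (Defs.dist d a (fun z => ~ V z)))) as [[V [HV HVd]]|Hn2].
    2:{ exfalso. apply (Rbar_lt_not_le _ _ HLa). apply lub_least.
        intros r [V [HV ->]]. destruct (Rbar_le_dec (Defs.dist d a (fun z => ~ V z)) (Finite D)) as [h|h]; auto.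
        exfalso; apply Hn2. exists V; split; auto. apply Rbar_not_le_lt; auto. }
    exists V. split; auto. intros z Hz. apply NNPP. intros Hnz.
    apply (Rbar_lt_not_le _ _ HVd).
    apply Rbar_le_trans with (Finite (d a z)).
    + apply glb_lb. exists z; auto.
    + eapply Rbar_le_trans; [|exact HA]. apply lub_ub. exists a, z; auto.
  - apply lub_least. intros r [D [HD0 [-> HD]]].
    assert (Hh : Rbar_le (Finite (D/2)) (L d U)).
    { apply glb_great. intros r [x ->].
      destruct (HD (fun z => d x z <= D/2)) as [V [HV HAV]].
      { apply lub_least. intros r [a [b [Ha [Hb ->]]]]. simpl.
        specialize (Htri a x b). rewrite (Hsym a x) in Htri. lra. }
      apply Rbar_le_trans with (Defs.dist d x (fun z => ~ V z)).
      + apply glb_great. intros r [z [Hz ->]]. simpl.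
        destruct (Rle_dec (d x z) (D/2)) as [h|h]; [exfalso; apply Hz; auto|lra].
      + apply lub_ub. exists V; auto. }
    destruct (L d U) as [l| |]; simpl in Hh.
    + simpl; lra.
    + rewrite two_pinf. simpl; auto.
    + contradiction.
Qed.
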